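(* Let $\mathcal{X}$ be a finite alphabet with $|\mathcal{X}|=q$, let $P_0,P_1$ be probability mass functions on $\mathcal{X}$ with the same support $\mathcal{X}$, let $\varepsilon>0$, $n>1$, $k^\star\in(1,n]$, and let $\mathcal{D}=(x_1,\dots,x_n)$ have independent entries with $x_1,\dots,x_{k^\star-1}\sim P_0$ and $x_{k^\star},\dots,x_n\sim P_1$. The Offline RR-CPD estimator passes each $x_i$ independently through the randomized response mechanism $W^r$ to obtain $y_i$, lets $Q_j(y)=\sum_xP_j(x)W^r(y|x)$ ($j=0,1$), and outputs $\hat k\in\arg\max_{k\in[n]}\sum_{i=k}^n\log\frac{Q_1(y_i)}{Q_0(y_i)}$. Then this estimator is $\varepsilon$-locally differentially private and, for any $\alpha\in[n]$, $(\alpha,\beta_r)$-accurate with $$\beta_r\le2\min\Bigg\{\sum_{i=1}^{i^*}\exp\Big(\frac{-2^{i-1}\alpha C_r^2}{s_r^2}\Big);\ \Big(1-\frac{C_r}{2}\Big)^{\alpha/2}\Bigg\},$$ where $s_r=\min\{2\varepsilon;\ \tanh(\varepsilon/2)\,s\}$, $C_r=2\big(\frac{e^\varepsilon-1}{e^\varepsilon+q-1}\big)^2d_{\mathrm{TV}}^2(P_0,P_1)$, $s=\max_x\log\frac{P_1(x)}{P_0(x)}-\min_x\log\frac{P_1(x)}{P_0(x)}$, $i^*=\lceil\log_2(\frac{n-1}{\alpha})\rceil$, and $\tanh(\varepsilon/2)=\frac{e^\varepsilon-1}{e^\varepsilon+1}$.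
   Context: Randomized response: $W^r(y|x)=\frac{e^\varepsilon}{e^\varepsilon+q-1}$ if $y=x$ and $\frac{1}{e^\varepsilon+q-1}$ if $y\ne x$ (output alphabet $\mathcal{X}$). A procedure is $\varepsilon$-LDP if each data point is released through a mechanism $W$ with $W(S|x)\le e^\varepsilon W(S|x')$ for all $x,x'$ and output sets $S$. $(\alpha,\beta)$-accurate means $\mathbb{P}\{\hat k\notin[k^\star-\alpha,k^\star+\alpha]\}=\beta$. $d_{\mathrm{TV}}(P_0,P_1)=\frac12\sum_x|P_0(x)-P_1(x)|$. $[a]=\{1,\dots,a\}$; natural logarithms. *)

(* Defs.v *)
From HB Require Import structures.
From mathcomp Require Import all_boot all_order all_algebra.
From mathcomp Require Import all_classical all_reals all_analysis.
Set Implicit Arguments. Unset Strict Implicit. Unset Printing Implicit Defensive.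
Import Order.TTheory GRing.Theory Num.Theory.
Local Open Scope ring_scope.

Section Defs.
Variable R : realType.
Variable X : finType.

Definition Wr (eps : R) (x y : X) : R :=
  if x == y then expR eps / (expR eps + #|X|%:R - 1)
  else 1 / (expR eps + #|X|%:R - 1).

Definition ldp (Y : finType) (eps : R) (W : X -> Y -> R) : Prop :=
  forall (x x' : X) (S : {set Y}),
    \sum_(y in S) W x y <= expR eps * \sum_(y in S) W x' y.

Definition is_pmf (P : X -> R) : Prop := (forall x, 0 <= P x) /\ \sum_x P x = 1.

Definition Qout (W : X -> X -> R) (P : X -> R) (y : X) : R :=
  \sum_x P x * W x y.

Definition dTV (P0 P1 : X -> R) : R := 2^-1 * \sum_x `|P0 x - P1 x|.

Definition maxf (f : X -> R) : R :=
  if [pick x : X] is Some x0 then \big[Num.max/f x0]_x f x else 0.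
Definition minf (f : X -> R) : R :=
  if [pick x : X] is Some x0 then \big[Num.min/f x0]_x f x else 0.

Definition sP (P0 P1 : X -> R) : R :=
  maxf (fun x => ln (P1 x / P0 x)) - minf (fun x => ln (P1 x / P0 x)).

(* distribution of entry i (0-based, i.e. position i.+1): P0 before k*, P1 from k* on *)
Definition Pat (n kstar : nat) (P0 P1 : X -> R) (i : 'I_n) : X -> R :=
  if (i.+1 < kstar)%N then P0 else P1.

(* Probability of an event on the privatized outputs y = (y_1..y_n), where
   x_i ~ Pat i independently and y_i ~ W(.|x_i) independently. *)
Definition probY (n kstar : nat) (P0 P1 : X -> R) (W : X -> X -> R)
    (E : pred {ffun 'I_n -> X}) : R :=
  \sum_(x : {ffun 'I_n -> X}) \sum_(y : {ffun 'I_n -> X} | E y)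
     \prod_(i < n) (Pat kstar P0 P1 i (x i) * W (x i) (y i)).

(* CUSUM-type statistic: sum_{i=k}^n log(Q1(y_i)/Q0(y_i)), k 1-based *)
Definition statS (n : nat) (Q0 Q1 : X -> R) (y : {ffun 'I_n -> X}) (k : nat) : R :=
  \sum_(i < n | (k <= i.+1)%N) ln (Q1 (y i) / Q0 (y i)).

Definition nat_of_pos (z : int) : nat := if z is Posz m then m else 0%N.

Definition log2 (x : R) : R := ln x / ln 2.

Definition rr_bound (n alpha : nat) (eps : R) (P0 P1 : X -> R) : R :=
  let q := #|X|%:R in
  let tanh_half := (expR eps - 1) / (expR eps + 1) in
  let s_r := Num.min (2 * eps) (tanh_half * sP P0 P1) in
  let C_r := 2 * ((expR eps - 1) / (expR eps + q - 1)) ^+ 2 * dTV P0 P1 ^+ 2 in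
  let istar := nat_of_pos (Num.ceil (log2 ((n%:R - 1) / alpha%:R))) in
  2 * Num.min
        (\sum_(1 <= i < istar.+1)
            expR (- ((2 ^+ i.-1) * alpha%:R * C_r ^+ 2) / s_r ^+ 2))
        ((1 - C_r / 2) `^ (alpha%:R / 2)).

End Defs.

(* Main.v *)
Require Import Defs.
From HB Require Import structures.
From mathcomp Require Import all_boot all_order all_algebra.
From mathcomp Require Import all_classical all_reals all_analysis.
From mathcomp Require Import zify ring lra.
Set Implicit Arguments. Unset Strict Implicit. Unset Printing Implicit Defensive.
Import Order.TTheory GRing.Theory Num.Theory.
Local Open Scope ring_scope.
Section CS.
Variables (R : realType) (I : finType).

Lemma cauchy_schwarz (u v : I -> R) :
  (\sum_i u i * v i) ^+ 2 <= (\sum_i u i ^+ 2) * (\sum_i v i ^+ 2).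
Proof.
set A := \sum_i u i ^+ 2; set B := \sum_i v i ^+ 2; set C := \sum_i u i * v i.
have quad : forall t, 0 <= t ^+ 2 * A - 2 * t * C + B.
  move=> t.
  have -> : t ^+ 2 * A - 2 * t * C + B = \sum_i (t * u i - v i) ^+ 2.
    rewrite /A /B /C mulr_sumr mulr_sumr -sumrB -big_split /=.
    by apply: eq_bigr => i _; ring.
  by apply: sumr_ge0 => i _; rewrite sqr_ge0.
have A0 : 0 <= A by apply: sumr_ge0 => i _; rewrite sqr_ge0.
have B0 : 0 <= B by apply: sumr_ge0 => i _; rewrite sqr_ge0.
have [Aeq0|Apos] := eqVneq A 0.
  have u0 : forall i, u i = 0.
    move=> i; apply/eqP; rewrite -sqrf_eq0; apply/eqP.
    by apply: (psumr_eq0P (P := xpredT) (F := fun i => u i ^+ 2)) => // j _; rewrite sqr_ge0.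
  have -> : C = 0 by rewrite /C big1 // => i _; rewrite u0 mul0r.
  by rewrite expr0n /= mulr_ge0.
have Ap : 0 < A by rewrite lt_def Apos A0.
have := quad (C / A).
have -> : (C / A) ^+ 2 * A - 2 * (C / A) * C + B = B - C ^+ 2 / A.
  by field; rewrite Apos.
rewrite subr_ge0 ler_pdivrMr // => H.
by rewrite mulrC.
Qed.

End CS.

Section BC.
Variables (R : realType) (X : finType).

Definition BCf (Q0 Q1 : X -> R) : R := \sum_x Num.sqrt (Q0 x * Q1 x).

Lemma BC_bound (Q0 Q1 : X -> R) :
  (forall x, 0 <= Q0 x) -> (forall x, 0 <= Q1 x) ->
  \sum_x Q0 x = 1 -> \sum_x Q1 x = 1 ->
  BCf Q0 Q1 ^+ 2 + (2^-1 * \sum_x `|Q0 x - Q1 x|) ^+ 2 <= 1.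
Proof.
move=> h0 h1 s0 s1.
set a := fun x => Num.sqrt (Q0 x); set b := fun x => Num.sqrt (Q1 x).
have a2 : forall x, a x ^+ 2 = Q0 x by move=> x; rewrite sqr_sqrtr.
have b2 : forall x, b x ^+ 2 = Q1 x by move=> x; rewrite sqr_sqrtr.
have a0 : forall x, 0 <= a x by move=> x; rewrite sqrtr_ge0.
have b0 : forall x, 0 <= b x by move=> x; rewrite sqrtr_ge0.
have BCe : BCf Q0 Q1 = \sum_x a x * b x.
  by apply: eq_bigr => x _; rewrite sqrtrM.
have De : \sum_x `|Q0 x - Q1 x| = \sum_x `|a x - b x| * (a x + b x).
  apply: eq_bigr => x _; rewrite -a2 -b2 subr_sqr normrM.
  by rewrite [`|a x + b x|]ger0_norm // addr_ge0.
have := cauchy_schwarz (fun x => `|a x - b x|) (fun x => a x + b x).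
rewrite -De.
have -> : \sum_x `|a x - b x| ^+ 2 = \sum_x Q0 x + \sum_x Q1 x - 2 * \sum_x a x * b x.
  rewrite mulr_sumr -big_split -sumrB /=.
  by apply: eq_bigr => x _; rewrite real_normK ?num_real // -a2 -b2; ring.
have -> : \sum_x (a x + b x) ^+ 2 = \sum_x Q0 x + \sum_x Q1 x + 2 * \sum_x a x * b x.
  rewrite mulr_sumr -!big_split /=.
  by apply: eq_bigr => x _; rewrite -a2 -b2; ring.
rewrite s0 s1 -BCe.
move=> H.
have -> : (2^-1 * \sum_x `|Q0 x - Q1 x|) ^+ 2 = (\sum_x `|Q0 x - Q1 x|) ^+ 2 / 4.
  by field.
lra.
Qed.

Lemma BC_ge0 (Q0 Q1 : X -> R) : 0 <= BCf Q0 Q1.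
Proof. by apply: sumr_ge0 => x _; rewrite sqrtr_ge0. Qed.

End BC.
Section Ville.
Variables (R : realType) (X : finType) (n : nat).
Variable mu : 'I_n -> X -> R.
Hypothesis mu_ge0 : forall i x, 0 <= mu i x.
Hypothesis mu_sum1 : forall i, \sum_x mu i x = 1.

Definition piY (y : {ffun 'I_n -> X}) : R := \prod_i mu i (y i).
Definition upd (y : {ffun 'I_n -> X}) (j : 'I_n) (v : X) : {ffun 'I_n -> X} :=
  [ffun i => if i == j then v else y i].

Lemma piY_ge0 y : 0 <= piY y.
Proof. by apply: prodr_ge0 => i _; apply: mu_ge0. Qed.

Lemma piY_sum1 : \sum_y piY y = 1.
Proof.
rewrite /piY -(bigA_distr_bigA (fun i x => mu i x)) /=.
by apply: big1 => i _; apply: mu_sum1.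
Qed.

Lemma sum_ind_le1 (E : pred {ffun 'I_n -> X}) : \sum_y piY y * (E y)%:R <= 1.
Proof.
rewrite -[leRHS]piY_sum1; apply: ler_sum => y _.
by case: (E y); rewrite ?mulr1 ?mulr0 ?lexx ?piY_ge0.
Qed.

Lemma upd_j y j v : upd y j v j = v.
Proof. by rewrite /upd ffunE eqxx. Qed.

Lemma piY_split y j : piY y = mu j (y j) * \prod_(i | i != j) mu i (y i).
Proof. by rewrite /piY (bigD1 j). Qed.

Lemma piY_upd y j v : piY (upd y j v) = mu j v * \prod_(i | i != j) mu i (y i).
Proof.
rewrite (piY_split _ j) upd_j; congr (_ * _); apply: eq_bigr => i /negbTE ij.
by rewrite /upd ffunE ij.
Qed.

Lemma fiber_sum (G : {ffun 'I_n -> X} -> R) j u v :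
  \sum_(y : {ffun 'I_n -> X} | y j == u) G (upd y j v) = \sum_(y : {ffun 'I_n -> X} | y j == v) G y.
Proof.
rewrite [RHS](reindex_onto (fun y => upd y j v) (fun y => upd y j u)); last first.
  move=> y /eqP yj; apply/ffunP => i; rewrite /upd !ffunE.
  by case: eqP => [->|]; rewrite ?yj.
apply: eq_bigl => y; rewrite upd_j eqxx /=.
apply/eqP/eqP => [yj|<-]; last by rewrite /upd ffunE eqxx.
apply/ffunP => i; rewrite /upd !ffunE; case: eqP => [->|//]; by rewrite yj.
Qed.

Lemma resample (j : 'I_n) (F : {ffun 'I_n -> X} -> R) :
  \sum_y piY y * F y = \sum_v mu j v * \sum_y piY y * F (upd y j v).
Proof.
have E1 : forall v, mu j v * \sum_y piY y * F (upd y j v) =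
   \sum_(y : {ffun 'I_n -> X}) mu j (y j) * (piY (upd y j v) * F (upd y j v)).
  move=> v; rewrite mulr_sumr; apply: eq_bigr => y _.
  by rewrite piY_upd (piY_split y j) !mulrA [mu j v * _]mulrC.
rewrite [RHS](eq_bigr _ (fun v _ => E1 v)).
have E2 : forall v, \sum_(y : {ffun 'I_n -> X}) mu j (y j) * (piY (upd y j v) * F (upd y j v)) =
  \sum_u mu j u * \sum_(y : {ffun 'I_n -> X} | y j == v) piY y * F y.
  move=> v; rewrite (@partition_big _ _ _ _ _ _ xpredT (fun y : {ffun 'I_n -> X} => y j) xpredT) //=.
  apply: eq_bigr => u _; rewrite mulr_sumr -(fiber_sum _ j u v).
  by apply: eq_bigr => y /eqP <-.
rewrite (eq_bigr _ (fun v _ => E2 v)).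
under eq_bigr do rewrite -mulr_suml mu_sum1 mul1r.
by rewrite [LHS](@partition_big _ _ _ _ _ _ xpredT (fun y : {ffun 'I_n -> X} => y j) xpredT).
Qed.

Variable f : 'I_n -> X -> R.
Hypothesis f_ge0 : forall i x, 0 <= f i x.
Variable rho : R.
Hypothesis rho_ge0 : 0 <= rho.
Hypothesis rho_le1 : rho <= 1.

Definition Ev (s : seq 'I_n) (c : R) (a : nat) (y : {ffun 'I_n -> X}) : bool :=
  has (fun m => (a <= m)%N && (1 <= c * \prod_(j <- take m s) f j (y j)))
      (iota 0 (size s).+1).

Lemma hasS (P : pred nat) k :
  has P (iota 0 k.+1) = P 0%N || has (fun m => P m.+1) (iota 0 k).
Proof.
have -> : iota 0 k.+1 = 0%N :: iota (1 + 0) k by [].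
rewrite iotaDl /= has_map; congr (_ || _).
Qed.

Lemma Ev_cons j s c a y : ~~ ((a == 0)%N && (1 <= c)) ->
  Ev (j :: s) c a y = Ev s (c * f j (y j)) a.-1 y.
Proof.
move=> H; rewrite /Ev hasS take0 big_nil mulr1.
have -> : ((a <= 0)%N && (1 <= c)) = false.
  by apply/negbTE; rewrite leqn0.
rewrite orFb; apply: eq_has => m /=.
rewrite big_cons mulrA; congr (_ && _).
by case: a {H}.
Qed.

Lemma Ev_upd s c a y j v : j \notin s -> Ev s c a (upd y j v) = Ev s c a y.
Proof.
move=> js; rewrite /Ev; apply: eq_has => m /=; congr (_ && (_ <= _ * _)).
apply: eq_big_seq => i /mem_take ii; rewrite /upd ffunE.
by case: eqP => // ij; move: js; rewrite -ij ii.
Qed.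

Lemma ville s : uniq s -> (forall j, j \in s -> \sum_v mu j v * f j v <= rho) ->
  forall c a, 0 <= c -> \sum_y piY y * (Ev s c a y)%:R <= c * rho ^+ a.
Proof.
elim: s => [|j s IH] Us Hs c a c0.
  have [/andP[/eqP a0 c1]|H] := boolP ((a == 0)%N && (1 <= c)).
    rewrite a0 expr0 mulr1; apply: le_trans c1.
    exact: sum_ind_le1.
  rewrite big1 ?mulr_ge0 ?exprn_ge0 // => y _.
  suff -> : Ev [::] c a y = false by rewrite mulr0.
  rewrite /Ev /= big_nil mulr1 orbF; apply/negbTE; by rewrite leqn0.
have [/andP[/eqP a0 c1]|H] := boolP ((a == 0)%N && (1 <= c)).
  rewrite a0 expr0 mulr1; apply: le_trans c1.
  exact: sum_ind_le1.
move: Us => /= /andP[js Us].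
under eq_bigr do rewrite Ev_cons //.
rewrite (resample j).
under eq_bigr do under eq_bigr do rewrite upd_j Ev_upd //.
apply: (@le_trans _ _ (\sum_v mu j v * ((c * f j v) * rho ^+ a.-1))).
  apply: ler_sum => v _; apply: ler_wpM2l; first exact: mu_ge0.
  apply: IH => //; first by move=> i ii; apply: Hs; rewrite inE ii orbT.
  by rewrite mulr_ge0.
have -> : \sum_v mu j v * (c * f j v * rho ^+ a.-1) =
   c * rho ^+ a.-1 * \sum_v mu j v * f j v.
  by rewrite mulr_sumr; apply: eq_bigr => v _; ring.
apply: (@le_trans _ _ (c * rho ^+ a.-1 * rho)).
  apply: ler_wpM2l; first by rewrite mulr_ge0 ?exprn_ge0.
  by apply: Hs; rewrite inE eqxx.
case: a {H} => [|a] /=.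
  by rewrite expr0 mulr1 ler_piMr.
by rewrite -mulrA -exprSr.
Qed.

End Ville.
Section Tanh.
Variable R : realType.

Lemma poly_key (y : R) : 1 <= y ->
  2 * ((y ^+ 2 - 1) / (y ^+ 2 + 1)) ^+ 2 <= 4 * ((y - 1) / y) ^+ 2.
Proof.
move=> y1.
have y0 : 0 < y by apply: lt_le_trans y1.
have d1 : 0 < y ^+ 2 + 1 by rewrite addr_gt0 // exprn_gt0.
have c0 : 0 < (y ^+ 2 * (y ^+ 2 + 1) ^+ 2)^-1 by rewrite invr_gt0 mulr_gt0 // exprn_gt0.
have e1 : 2 * ((y ^+ 2 - 1) / (y ^+ 2 + 1)) ^+ 2 =
   2 * (y ^+ 2 - 1) ^+ 2 * y ^+ 2 * (y ^+ 2 * (y ^+ 2 + 1) ^+ 2)^-1.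
  by field; rewrite (gt_eqF y0) (gt_eqF d1).
have e2 : 4 * ((y - 1) / y) ^+ 2 =
   4 * (y - 1) ^+ 2 * (y ^+ 2 + 1) ^+ 2 * (y ^+ 2 * (y ^+ 2 + 1) ^+ 2)^-1.
  by field; rewrite (gt_eqF y0) (gt_eqF d1).
rewrite e1 e2 ler_pM2r // -subr_ge0.
have -> : 4 * (y - 1) ^+ 2 * (y ^+ 2 + 1) ^+ 2 - 2 * (y ^+ 2 - 1) ^+ 2 * y ^+ 2 =
  2 * (y - 1) ^+ 2 * (y ^+ 2 * (y - 1) ^+ 2 + 2 * y ^+ 2 + 2) by ring.
have h1 := sqr_ge0 (y - 1); have h2 := sqr_ge0 y.
apply: mulr_ge0; first by apply: mulr_ge0.
by apply: addr_ge0 => //; apply: addr_ge0; apply: mulr_ge0.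
Qed.

Lemma key_tanh (z : R) : 0 <= z ->
  2 * ((expR z ^+ 2 - 1) / (expR z ^+ 2 + 1)) ^+ 2 <= (2 * z) ^+ 2.
Proof.
move=> z0; set y := expR z.
have y1 : 1 <= y by rewrite /y -expR0 ler_expR.
have y0 : 0 < y by rewrite /y expR_gt0.
apply: le_trans (poly_key y1) _.
have w0 : 0 <= (y - 1) / y by rewrite divr_ge0 ?subr_ge0 // ltW.
have wz : (y - 1) / y <= z.
  have := expR_ge1Dx (- z); rewrite expRN -/y => H.
  rewrite mulrBl divff ?gt_eqF // mul1r; lra.
move: w0 wz; set w := (y - 1) / y => w0 wz.
nra.
Qed.
End Tanh.
Section Dist.
Variables (R : realType) (X : finType).

Lemma maxf_ge (f : X -> R) x : f x <= maxf f.
Proof.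
rewrite /maxf; case: pickP => [x0 _|H]; last by have := H x.
exact: le_bigmax.
Qed.

Lemma minf_le (f : X -> R) x : minf f <= f x.
Proof.
rewrite /minf; case: pickP => [x0 _|H]; last by have := H x.
exact: bigmin_le.
Qed.

Lemma Qout_alt (eps : R) (P : X -> R) y : 0 < eps -> \sum_x P x = 1 ->
  Qout (Wr eps) P y = (1 + (expR eps - 1) * P y) / (expR eps + #|X|%:R - 1).
Proof.
move=> e0 s1.
have den0 : 0 < expR eps + #|X|%:R - 1.
  have : 1 < expR eps by rewrite -expR0 ltr_expR.
  have : (0:R) <= #|X|%:R by [].
  lra.
rewrite /Qout (bigD1 y) //= /Wr eqxx.
have -> : \sum_(i | i != y) P i * (if i == y then expR eps / (expR eps + #|X|%:R - 1)
                              else 1 / (expR eps + #|X|%:R - 1))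
   = (\sum_(i | i != y) P i) / (expR eps + #|X|%:R - 1).
  rewrite mulr_suml; apply: eq_bigr => i /negbTE ->; by rewrite mul1r.
have : \sum_x P x = P y + \sum_(i | i != y) P i by rewrite (bigD1 y).
rewrite s1 => H.
have -> : \sum_(i | i != y) P i = 1 - P y by lra.
by field; rewrite gt_eqF.
Qed.

End Dist.
Section Dist2.
Variables (R : realType) (X : finType).

Lemma minf_le_maxf (f : X -> R) : minf f <= maxf f.
Proof.
rewrite /maxf /minf; case: pickP => [x0 _|_] //.
exact: le_trans (bigmin_le _ x0 _) (le_bigmax _ _ x0).
Qed.

Lemma dTV_ge0 (P0 P1 : X -> R) : 0 <= dTV P0 P1.
Proof. by rewrite /dTV mulr_ge0 // sumr_ge0. Qed.

Lemma dTV_tanh (P0 P1 : X -> R) : is_pmf P0 -> is_pmf P1 ->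
  (forall x, 0 < P0 x) -> (forall x, 0 < P1 x) ->
  dTV P0 P1 <= (expR (sP P0 P1 / 4) ^+ 2 - 1) / (expR (sP P0 P1 / 4) ^+ 2 + 1).
Proof.
move=> [_ s0] [_ s1] p0pos p1pos.
set r := fun x => ln (P1 x / P0 x).
set M := maxf r; set m := minf r.
have sE : sP P0 P1 = M - m by [].
have rat : forall x, P1 x = P0 x * expR (r x).
  move=> x; rewrite /r lnK ?posrE ?divr_gt0 //.
  by field; rewrite gt_eqF.
set U := expR M; set L := expR m; set y := expR (sP P0 P1 / 4).
have hU : forall x, P1 x <= U * P0 x.
  move=> x; rewrite rat mulrC ler_pM2r // /U ler_expR; exact: maxf_ge.
have hL : forall x, L * P0 x <= P1 x.
  move=> x; rewrite rat mulrC ler_pM2l // /L ler_expR; exact: minf_le.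
have s_ge0 : 0 <= sP P0 P1 by rewrite sE subr_ge0 minf_le_maxf.
have y1 : 1 <= y by rewrite /y -expR0 ler_expR divr_ge0.
have L0 : 0 < L by rewrite expR_gt0.
have Uy : U = L * y ^+ 4.
  rewrite /y -expRM_natl /U /L -expRD; congr expR.
  by rewrite sE; field.
set A := fun x => P0 x < P1 x.
set p0 := \sum_(x | A x) P0 x.
set D := \sum_(x | A x) (P1 x - P0 x).
have hsum : \sum_x (P1 x - P0 x) = 0 by rewrite sumrB s0 s1 subrr.
have hsplit : \sum_x (P1 x - P0 x) = D + \sum_(x | ~~ A x) (P1 x - P0 x) by rewrite (bigID A).
have hneg : \sum_(x | ~~ A x) (P0 x - P1 x) = - \sum_(x | ~~ A x) (P1 x - P0 x).
  by rewrite -sumrN; apply: eq_bigr => x _; rewrite opprB.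
have dE : dTV P0 P1 = D.
  rewrite /dTV (bigID A) /=.
  have -> : \sum_(x | A x) `|P0 x - P1 x| = D.
    by apply: eq_bigr => x Ax; rewrite ltr0_norm ?opprB // subr_lt0.
  have -> : \sum_(x | ~~ A x) `|P0 x - P1 x| = \sum_(x | ~~ A x) (P0 x - P1 x).
    by apply: eq_bigr => x Ax; rewrite ger0_norm // subr_ge0 leNgt.
  lra.
have D0 : 0 <= D by apply: sumr_ge0 => x Ax; rewrite subr_ge0 ltW.
have h1 : D <= (U - 1) * p0.
  rewrite /D /p0 mulr_sumr; apply: ler_sum => x _.
  have := hU x; lra.
have sP0 : \sum_x P0 x = p0 + \sum_(x | ~~ A x) P0 x by rewrite (bigID A).
have pA0 : 0 <= \sum_(x | ~~ A x) P0 x by apply: sumr_ge0 => x _; rewrite ltW.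
have pp0 : 0 <= p0 by apply: sumr_ge0 => x _; rewrite ltW.
have h2 : D <= (1 - L) * (1 - p0).
  have -> : 1 - p0 = \sum_(x | ~~ A x) P0 x by lra.
  have -> : D = \sum_(x | ~~ A x) (P0 x - P1 x) by lra.
  rewrite mulr_sumr; apply: ler_sum => x _.
  have := hL x; lra.
rewrite dE.
have d1 : 0 < y ^+ 2 + 1 by rewrite addr_gt0 // exprn_gt0 // (lt_le_trans ltr01 y1).
have rhs0 : 0 <= (y ^+ 2 - 1) / (y ^+ 2 + 1).
  by apply: divr_ge0; [rewrite subr_ge0 exprn_ege1 | exact: ltW].
have [U1|U1] := ltP U 1.
  have : (U - 1) * p0 <= 0 by apply: mulr_le0_ge0; lra.
  move=> H; apply: le_trans rhs0; lra.
have [L1|L1] := ltP 1 L.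
  have : (1 - L) * (1 - p0) <= 0.
    by apply: mulr_le0_ge0; lra.
  move=> H; apply: le_trans rhs0; lra.
have key : D * (U - L) <= (U - 1) * (1 - L).
  have e1 : D * (1 - L) <= (U - 1) * p0 * (1 - L) by rewrite ler_wpM2r // subr_ge0.
  have e2 : D * (U - 1) <= (1 - L) * (1 - p0) * (U - 1) by rewrite ler_wpM2r // subr_ge0.
  have -> : D * (U - L) = D * (1 - L) + D * (U - 1) by ring.
  have -> : (U - 1) * (1 - L) = (U - 1) * p0 * (1 - L) + (1 - L) * (1 - p0) * (U - 1) by ring.
  exact: lerD.
have key2 : (U - 1) * (1 - L) <= L * (y ^+ 2 - 1) ^+ 2.
  rewrite Uy -subr_ge0.
  have -> : L * (y ^+ 2 - 1) ^+ 2 - (L * y ^+ 4 - 1) * (1 - L) = (L * y ^+ 2 - 1) ^+ 2 by ring.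
  exact: sqr_ge0.
have [yy|yy] := eqVneq (y ^+ 2) 1.
  have y4 : y ^+ 4 = (y ^+ 2) ^+ 2 by rewrite -exprM.
  have UL : U = L by rewrite Uy y4 yy expr1n mulr1.
  have U1' : U = 1 by lra.
  have : D <= 0 by move: h1; rewrite U1' subrr mul0r.
  move=> H; apply: le_trans rhs0; lra.
have y2 : 0 < y ^+ 2 - 1 by rewrite subr_gt0 lt_def yy exprn_ege1.
rewrite ler_pdivlMr //.
have : D * (L * ((y ^+ 2 - 1) * (y ^+ 2 + 1))) <= L * (y ^+ 2 - 1) * (y ^+ 2 - 1).
  have -> : D * (L * ((y ^+ 2 - 1) * (y ^+ 2 + 1))) = D * (U - L).
    by rewrite Uy; ring.
  have -> : L * (y ^+ 2 - 1) * (y ^+ 2 - 1) = L * (y ^+ 2 - 1) ^+ 2 by ring.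
  exact: le_trans key key2.
have -> : D * (L * ((y ^+ 2 - 1) * (y ^+ 2 + 1))) = D * (y ^+ 2 + 1) * (L * (y ^+ 2 - 1)) by ring.
have -> : L * (y ^+ 2 - 1) * (y ^+ 2 - 1) = (y ^+ 2 - 1) * (L * (y ^+ 2 - 1)) by ring.
by rewrite ler_pM2r // mulr_gt0.
Qed.

End Dist2.
Section Key.
Variables (R : realType) (X : finType).

Lemma dQ_eq (eps : R) (P0 P1 : X -> R) : 0 < eps -> is_pmf P0 -> is_pmf P1 ->
  2^-1 * \sum_y `|Qout (Wr eps) P0 y - Qout (Wr eps) P1 y| =
  (expR eps - 1) / (expR eps + #|X|%:R - 1) * dTV P0 P1.
Proof.
move=> e0 [_ s0] [_ s1].
have den0 : 0 < expR eps + #|X|%:R - 1.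
  have : 1 < expR eps by rewrite -expR0 ltr_expR.
  have : (0:R) <= #|X|%:R by [].
  lra.
have t0 : 0 <= (expR eps - 1) / (expR eps + #|X|%:R - 1).
  apply: divr_ge0; last exact: ltW.
  by rewrite subr_ge0 -expR0 ler_expR ltW.
rewrite /dTV mulrCA; congr (_ * _); rewrite mulr_sumr; apply: eq_bigr => y _.
rewrite !Qout_alt //.
have -> : (1 + (expR eps - 1) * P0 y) / (expR eps + #|X|%:R - 1) -
  (1 + (expR eps - 1) * P1 y) / (expR eps + #|X|%:R - 1) =
  (expR eps - 1) / (expR eps + #|X|%:R - 1) * (P0 y - P1 y).
  by field; rewrite gt_eqF.
by rewrite normrM ger0_norm.
Qed.

Lemma dTV_le1 (P0 P1 : X -> R) : is_pmf P0 -> is_pmf P1 -> dTV P0 P1 <= 1.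
Proof.
move=> [h0 s0] [h1 s1]; rewrite /dTV.
have : \sum_x `|P0 x - P1 x| <= \sum_x (P0 x + P1 x).
  apply: ler_sum => x _; apply: le_trans (ler_normB _ _) _.
  by rewrite !ger0_norm.
rewrite big_split /= s0 s1 => H; lra.
Qed.

Lemma dTV_q1 (P0 P1 : X -> R) : is_pmf P0 -> is_pmf P1 -> #|X| = 1%N -> dTV P0 P1 = 0.
Proof.
move=> [h0 s0] [h1 s1] q1; have [x0 Hx] := fintype1 q1.
have sumE : forall F : X -> R, \sum_x F x = F x0.
  move=> F; rewrite (eq_bigr (fun _ => F x0)) ?sumr_const ?q1 // => x _.
  by rewrite (Hx x).
move: s0 s1; rewrite /dTV !sumE => -> ->.
by rewrite subrr normr0 mulr0.
Qed.

End Key.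
Section Key8.
Variables (R : realType) (X : finType).

Lemma card_pos (P : X -> R) : is_pmf P -> (0 < #|X|)%N.
Proof.
move=> [_ s]; case: (pickP (fun _ : X => true)) => [x0 _|H].
  by apply/card_gt0P; exists x0.
have : \sum_x P x = 0 by rewrite big_pred0.
by rewrite s => /eqP; rewrite oner_eq0.
Qed.

Lemma key8 (eps : R) (P0 P1 : X -> R) : 0 < eps -> is_pmf P0 -> is_pmf P1 ->
  (forall x, 0 < P0 x) -> (forall x, 0 < P1 x) ->
  8 * ((expR eps - 1) / (expR eps + #|X|%:R - 1) * dTV P0 P1) ^+ 2 <=
  (Num.min (2 * eps) ((expR eps - 1) / (expR eps + 1) * sP P0 P1)) ^+ 2.
Proof.
move=> e0 hP0 hP1 p0 p1.
set e := expR eps; set th := (e - 1) / (e + 1); set D := dTV P0 P1.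
set tt := (e - 1) / (e + #|X|%:R - 1); set s := sP P0 P1.
have e1 : 1 < e by rewrite /e -expR0 ltr_expR.
have D0 : 0 <= D by exact: dTV_ge0.
have D1 : D <= 1 by exact: dTV_le1.
have th0 : 0 <= th by rewrite /th divr_ge0 //; lra.
have tt0 : 0 <= tt.
  rewrite /tt divr_ge0 //; first lra.
  have : (0:R) <= #|X|%:R by []. lra.
have hD : tt * D <= th * D.
  have := card_pos hP0; rewrite leq_eqVlt => /orP[/eqP q1|q2].
    by rewrite /D dTV_q1 // ?mulr0.
  rewrite ler_wpM2r //.
  have q2' : (2:R) <= #|X|%:R by rewrite (ler_nat R 2).
  rewrite -subr_ge0.
  have -> : th - tt = (e - 1) * (#|X|%:R - 2) / ((e + 1) * (e + #|X|%:R - 1)).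
    by rewrite /th /tt; field; apply/andP; split; apply/lt0r_neq0; lra.
  apply: divr_ge0; first by apply: mulr_ge0; lra.
  by apply: mulr_ge0; lra.
have htD0 : 0 <= tt * D by rewrite mulr_ge0.
have ht : 2 * th ^+ 2 <= eps ^+ 2.
  have := key_tanh (ltW (divr_gt0 e0 (ltr0Sn R 1))).
  rewrite -expRM_natl (_ : 2%:R * (eps / 2) = eps); last by field.
  by move=> h; exact: h.
have s0 : 0 <= s by rewrite /s /sP subr_ge0 minf_le_maxf.
have hs : 8 * D ^+ 2 <= s ^+ 2.
  have := key_tanh (divr_ge0 s0 (ler0n R 4)).
  have := dTV_tanh hP0 hP1 p0 p1; rewrite -/D -/s.
  set T := (_ / _) => DT.
  have : D ^+ 2 <= T ^+ 2 by rewrite ler_sqr //; exact: le_trans DT.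
  move=> DT2 H.
  have -> : s ^+ 2 = 4 * (2 * (s / 4)) ^+ 2 by field.
  lra.
have A1 : 8 * (tt * D) ^+ 2 <= (2 * eps) ^+ 2.
  have : tt * D <= th by apply: le_trans hD _; rewrite -[leRHS]mulr1 ler_wpM2l.
  move=> h; have : (tt * D) ^+ 2 <= th ^+ 2 by rewrite ler_sqr.
  move=> h2; have -> : (2 * eps) ^+ 2 = 4 * eps ^+ 2 by ring.
  lra.
have A2 : 8 * (tt * D) ^+ 2 <= (th * s) ^+ 2.
  have thD0 : 0 <= th * D by rewrite mulr_ge0.
  have : (tt * D) ^+ 2 <= (th * D) ^+ 2 by rewrite ler_sqr ?nnegrE.
  move=> h; apply: le_trans (ler_wpM2l _ h) _ => //.
  have -> : 8 * (th * D) ^+ 2 = th ^+ 2 * (8 * D ^+ 2) by ring.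
  rewrite [(th * s) ^+ 2]exprMn; apply: ler_wpM2l; [exact: sqr_ge0 | exact: hs].
have [h|h] := leP (2 * eps) (th * s).
  exact: A1.
exact: A2.
Qed.

End Key8.
Section Seqs.
Variables (R : realType) (n : nat) (i0 : 'I_n).

Lemma sum_seq_pred (s : seq 'I_n) (P : pred 'I_n) (F : 'I_n -> R) :
  uniq s -> (forall i, (i \in s) = P i) -> \sum_(j <- s) F j = \sum_(i | P i) F i.
Proof.
move=> us sP; rewrite -[RHS]big_filter; apply: perm_big; apply: uniq_perm => //.
  exact: (filter_uniq _ (index_enum_uniq _)).
by move=> i; rewrite mem_filter mem_index_enum andbT sP.
Qed.

Definition sL (kstar : nat) : seq 'I_n :=
  [seq insubd i0 (kstar.-2 - t)%N | t <- iota 0 kstar.-1].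
Definition sR (kstar : nat) : seq 'I_n :=
  [seq insubd i0 (kstar.-1 + t)%N | t <- iota 0 (n - kstar.-1)].

Lemma size_sL kstar : size (sL kstar) = kstar.-1.
Proof. by rewrite size_map size_iota. Qed.
Lemma size_sR kstar : size (sR kstar) = (n - kstar.-1)%N.
Proof. by rewrite size_map size_iota. Qed.

Lemma uniq_sL kstar : (1 < kstar <= n)%N -> uniq (sL kstar).
Proof.
move=> hk; rewrite map_inj_in_uniq ?iota_uniq // => t1 t2.
rewrite !mem_iota !add0n => h1 h2 /(congr1 val); rewrite !val_insubd.
by case: ifP; case: ifP => *; lia.
Qed.

Lemma uniq_sR kstar : (1 < kstar <= n)%N -> uniq (sR kstar).
Proof.
move=> hk; rewrite map_inj_in_uniq ?iota_uniq // => t1 t2.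
rewrite !mem_iota !add0n => h1 h2 /(congr1 val); rewrite !val_insubd.
by case: ifP; case: ifP => *; lia.
Qed.

Lemma mem_take_sL kstar m (i : 'I_n) : (1 < kstar <= n)%N -> (m <= kstar.-1)%N ->
  (i \in take m (sL kstar)) = ((kstar - m <= i.+1)%N && (i.+1 < kstar)%N).
Proof.
move=> hk hm; rewrite /sL -map_take take_iota.
have -> : minn m kstar.-1 = m by apply/minn_idPl.
apply/mapP/idP.
  move=> [t]; rewrite mem_iota add0n => ht ->; rewrite val_insubd.
  case: ifP => *; lia.
move=> hi; exists (kstar.-2 - i)%N; first by rewrite mem_iota add0n; lia.
apply: val_inj; rewrite val_insubd /=; case: ifP => *; have := ltn_ord i; lia.
Qed.

Lemma mem_take_sR kstar m (i : 'I_n) : (1 < kstar <= n)%N -> (m <= n - kstar.-1)%N ->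
  (i \in take m (sR kstar)) = ((kstar <= i.+1)%N && (i.+1 < kstar + m)%N).
Proof.
move=> hk hm; rewrite /sR -map_take take_iota.
have -> : minn m (n - kstar.-1) = m by apply/minn_idPl.
apply/mapP/idP.
  move=> [t]; rewrite mem_iota add0n => ht ->; rewrite val_insubd.
  case: ifP => *; lia.
move=> hi; exists (i - kstar.-1)%N; first by rewrite mem_iota add0n; have := ltn_ord i; lia.
apply: val_inj; rewrite val_insubd /=; case: ifP => *; have := ltn_ord i; lia.
Qed.

End Seqs.
Section Misc.
Variables (R : realType) (X : finType).

Lemma probY_eq n kstar (P0 P1 : X -> R) (W : X -> X -> R) (E : pred {ffun 'I_n -> X}) :
  probY kstar P0 P1 W E =
  \sum_y piY (fun i => Qout W (Pat kstar P0 P1 i)) y * (E y)%:R.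
Proof.
rewrite /probY exchange_big /= big_mkcond; apply: eq_bigr => y _.
rewrite /piY /Qout.
rewrite -(bigA_distr_bigA (fun i u => Pat kstar P0 P1 i u * W u (y i))) /=.
by case: (E y); rewrite ?mulr1 ?mulr0.
Qed.

Lemma ldp_Wr (eps : R) : 0 < eps -> @ldp R X X eps (Wr eps).
Proof.
move=> e0 x x' S; rewrite mulr_sumr; apply: ler_sum => y _.
have e1 : 1 <= expR eps by rewrite -expR0 ler_expR ltW.
have den0 : 0 < expR eps + #|X|%:R - 1.
  have : 1 < expR eps by rewrite -expR0 ltr_expR.
  have : (0:R) <= #|X|%:R by []. lra.
have hi : 0 < (expR eps + #|X|%:R - 1)^-1 by rewrite invr_gt0.
have up : Wr eps x y <= expR eps / (expR eps + #|X|%:R - 1).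
  rewrite /Wr; case: eqP => _ //; rewrite ler_pM2r // ltW //.
have lo : 1 / (expR eps + #|X|%:R - 1) <= Wr eps x' y.
  rewrite /Wr; case: eqP => _ //; rewrite ler_pM2r // ltW //.
apply: le_trans up _; rewrite -[X in X / _]mulr1 -mulrA.
by apply: ler_wpM2l => //; rewrite ltW // expR_gt0.
Qed.

Lemma sqrt_expR (z : R) : 0 < z -> expR (ln z / 2) = Num.sqrt z.
Proof. by move=> z0; rewrite -powR12_sqrt ?ltW // /powR gt_eqF // mulrC. Qed.

Lemma statS_diffL n (Q0 Q1 : X -> R) (y : {ffun 'I_n -> X}) k kstar : (k <= kstar)%N ->
  statS Q0 Q1 y k = \sum_(i < n | (k <= i.+1)%N && (i.+1 < kstar)%N) ln (Q1 (y i) / Q0 (y i))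
                    + statS Q0 Q1 y kstar.
Proof.
move=> hk; rewrite /statS (bigID (fun i : 'I_n => (kstar <= i.+1)%N)) /= addrC.
congr (_ + _); apply: eq_bigl => i; rewrite -?ltnNge //.
by apply/idP/idP => [/andP[_ ->]//|h]; rewrite h andbT (leq_trans hk h).
Qed.

Lemma statS_diffR n (Q0 Q1 : X -> R) (y : {ffun 'I_n -> X}) k kstar : (kstar <= k)%N ->
  statS Q0 Q1 y kstar = \sum_(i < n | (kstar <= i.+1)%N && (i.+1 < k)%N) ln (Q1 (y i) / Q0 (y i))
                    + statS Q0 Q1 y k.
Proof.
move=> hk; rewrite /statS (bigID (fun i : 'I_n => (k <= i.+1)%N)) /= addrC.
congr (_ + _); apply: eq_bigl => i; rewrite -?ltnNge //.
by apply/idP/idP => [/andP[_ ->]//|h]; rewrite h andbT (leq_trans hk h).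
Qed.

End Misc.
Section Final.
Variable R : realType.

Lemma final_pow (BC C : R) (alpha : nat) : 0 <= BC -> BC ^+ 2 + C / 2 <= 1 ->
  BC ^+ alpha <= (1 - C / 2) `^ (alpha%:R / 2).
Proof.
move=> b0 h.
have h2 : BC ^+ 2 <= 1 - C / 2 by lra.
have hr : 0 <= alpha%:R / 2 :> R by rewrite divr_ge0.
have hx : BC ^+ 2 \in Num.nneg by rewrite nnegrE exprn_ge0.
have hy : 1 - C / 2 \in Num.nneg by rewrite nnegrE (le_trans _ h2) // exprn_ge0.
apply: le_trans (ge0_ler_powR hr hx hy h2).
rewrite -(powR_mulrn 2 b0) -powRrM (_ : 2%:R * (alpha%:R / 2) = alpha%:R); last by field.
by rewrite powR_mulrn.
Qed.

Lemma final_exp (BC C s : R) (alpha : nat) : 0 <= BC -> BC ^+ 2 + C / 2 <= 1 ->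
  0 <= C -> 4 * C <= s ^+ 2 ->
  BC ^+ alpha <= expR (- (alpha%:R * C ^+ 2) / s ^+ 2).
Proof.
move=> b0 h C0 hs.
have e1 : BC ^+ 2 <= expR (- C / 2).
  apply: le_trans (expR_ge1Dx _); lra.
have e2 : BC <= expR (- C / 4).
  have : BC ^+ 2 <= expR (- C / 4) ^+ 2.
    by rewrite -expRM_natr (_ : - C / 4 * 2%:R = - C / 2) //; field.
  have hb : BC \in Num.nneg by rewrite nnegrE.
  have he : expR (- C / 4) \in Num.nneg by rewrite nnegrE ltW ?expR_gt0.
  by rewrite (ler_sqr hb he).
apply: le_trans (lerXn2r alpha _ _ e2) _.
- by rewrite nnegrE.
- by rewrite nnegrE ltW ?expR_gt0.
rewrite -expRM_natr ler_expR.
have [s0|s0] := eqVneq (s ^+ 2) 0.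
  rewrite s0 invr0 mulr0.
  have -> : C = 0 by lra.
  by rewrite oppr0 mul0r mul0r.
have sp : 0 < s ^+ 2 by rewrite lt_def s0 sqr_ge0.
rewrite ler_pdivlMr // -subr_ge0.
have -> : - (alpha%:R * C ^+ 2) - - C / 4 * alpha%:R * s ^+ 2 =
   alpha%:R * C / 4 * (s ^+ 2 - 4 * C) by field.
by rewrite !mulr_ge0 ?subr_ge0 // divr_ge0.
Qed.

End Final.
Lemma sqrt_mul_ratio (R : realType) (a b : R) : 0 < a -> 0 < b ->
  a * Num.sqrt (b / a) = Num.sqrt (a * b).
Proof.
move=> a0 b0.
rewrite -{1}(ger0_norm (ltW a0)) -sqrtr_sqr -sqrtrM ?sqr_ge0 //.
by congr Num.sqrt; field; rewrite gt_eqF.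
Qed.

Lemma Qout_pos (R : realType) (X : finType) (eps : R) (P : X -> R) y :
  0 < eps -> is_pmf P -> 0 < Qout (Wr eps) P y.
Proof.
move=> e0 [h s]; rewrite Qout_alt //.
have e1 : 1 < expR eps by rewrite -expR0 ltr_expR.
apply: divr_gt0.
  have := h y; have : 0 <= (expR eps - 1) * P y by rewrite mulr_ge0 // subr_ge0 ltW.
  lra.
have : (0:R) <= #|X|%:R by []. lra.
Qed.

Lemma Qout_sum (R : realType) (X : finType) (eps : R) (P : X -> R) :
  0 < eps -> is_pmf P -> \sum_y Qout (Wr eps) P y = 1.
Proof.
move=> e0 [h s]; under eq_bigr do rewrite Qout_alt //.
have e1 : 1 < expR eps by rewrite -expR0 ltr_expR.
have den0 : 0 < expR eps + #|X|%:R - 1.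
  have : (0:R) <= #|X|%:R by []. lra.
rewrite -mulr_suml big_split /= sumr_const -mulr_sumr s.
by field; rewrite gt_eqF.
Qed.

Lemma eqle (R : realType) (x y : R) : x = y -> x <= y.
Proof. by move->. Qed.

Lemma ist_pos (R : realType) (n alpha : nat) : (alpha < n.-1)%N -> (0 < alpha)%N ->
  (0 < Defs.nat_of_pos (Num.ceil (log2 ((n%:R - 1) / alpha%:R : R))))%N.
Proof.
move=> an a0'.
have hgt : 1 < (n%:R - 1) / alpha%:R :> R.
  have a0 : 0 < alpha%:R :> R by rewrite ltr0n.
  rewrite ltr_pdivlMr // mul1r.
  have : (alpha.+2 <= n)%N by lia.
  rewrite -(ler_nat R) -!natr1 => h; lra.
have lg : 0 < log2 ((n%:R - 1) / alpha%:R : R).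
  by rewrite /log2 divr_gt0 // ln_gt0 // ltr1n.
move: lg; rewrite -ceil_gt0.
by case: (Num.ceil _) => [m|m] //=; rewrite ltz_nat.
Qed.

Lemma two_mul (R : realType) (x : R) : x + x = 2 * x.
Proof. by ring. Qed.

Lemma min_ge (R : realType) (z a b : R) : z <= a -> z <= b -> z <= Num.min a b.
Proof. by move=> ha hb; have [h|h] := leP a b. Qed.

Theorem theorem5p6 (R : realType) (X : finType) (P0 P1 : X -> R)
    (eps : R) (n kstar alpha : nat) :
  is_pmf P0 -> is_pmf P1 ->
  (forall x, 0 < P0 x) -> (forall x, 0 < P1 x) ->
  0 < eps -> (1 < n)%N -> (1 < kstar <= n)%N -> (1 <= alpha <= n)%N ->
  @ldp R X X eps (Wr eps) /\
  forall khat : {ffun 'I_n -> X} -> nat,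
    (forall y, (1 <= khat y <= n)%N /\
       forall k, (1 <= k <= n)%N ->
         statS (Qout (Wr eps) P0) (Qout (Wr eps) P1) y k
         <= statS (Qout (Wr eps) P0) (Qout (Wr eps) P1) y (khat y)) ->
    probY kstar P0 P1 (Wr eps)
      (fun y => ~~ ((kstar - alpha <= khat y)%N && (khat y <= kstar + alpha)%N))
    <= rr_bound n alpha eps P0 P1.
Proof.
move=> hP0 hP1 p0 p1 e0 hn hk ha; split; first exact: ldp_Wr.
move=> khat Hk.
have n0 : (0 < n)%N by lia.
pose i0 := Ordinal n0.
rewrite probY_eq.
have muE : forall i : 'I_n, Qout (Wr eps) (Pat kstar P0 P1 i) =
    if (i.+1 < kstar)%N then Qout (Wr eps) P0 else Qout (Wr eps) P1.
  by move=> i; rewrite /Pat; case: ifP.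
have mu_ge0 : forall (i : 'I_n) x, 0 <= Qout (Wr eps) (Pat kstar P0 P1 i) x.
  by move=> i x; rewrite muE; case: ifP => _; apply: ltW; apply: Qout_pos.
have mu_sum1 : forall i : 'I_n, \sum_x Qout (Wr eps) (Pat kstar P0 P1 i) x = 1.
  by move=> i; rewrite muE; case: ifP => _; apply: Qout_sum.
have bnd0 : 0 <= rr_bound n alpha eps P0 P1.
  rewrite /rr_bound /=; apply: mulr_ge0 => //; apply: min_ge.
    by apply: sumr_ge0 => i _; rewrite ltW ?expR_gt0.
  exact: powR_ge0.
have [abig|asmall] := leqP n.-1 alpha.
  apply: le_trans bnd0; rewrite le_eqVlt; apply/orP; left; apply/eqP.
  apply: big1 => y _ /=.
  have := (Hk y).1 => /andP[h1 h2].
  suff -> : (kstar - alpha <= khat y)%N && (khat y <= kstar + alpha)%N by rewrite mulr0.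
  by apply/andP; split; lia.
set Q0 := Qout (Wr eps) P0; set Q1 := Qout (Wr eps) P1.
have Q0p : forall v, 0 < Q0 v by move=> v; apply: Qout_pos.
have Q1p : forall v, 0 < Q1 v by move=> v; apply: Qout_pos.
have Q0s : \sum_v Q0 v = 1 by apply: Qout_sum.
have Q1s : \sum_v Q1 v = 1 by apply: Qout_sum.
have hBC := BC_bound (fun v => ltW (Q0p v)) (fun v => ltW (Q1p v)) Q0s Q1s.
rewrite dQ_eq // in hBC.
set BC := BCf Q0 Q1 in hBC *.
have BC0 : 0 <= BC by apply: BC_ge0.
have BC1 : BC <= 1.
  set t := _ * dTV P0 P1 in hBC; have := sqr_ge0 t; nra.
pose r := fun v => ln (Q1 v / Q0 v).
pose fL := fun (_ : 'I_n) v => expR (r v / 2).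
pose fR := fun (_ : 'I_n) v => expR (ln (Q0 v / Q1 v) / 2).
have VL : \sum_y piY (fun i => Qout (Wr eps) (Pat kstar P0 P1 i)) y *
     (Ev fL (sL i0 kstar) 1 alpha.+1 y)%:R <= 1 * BC ^+ alpha.+1.
  apply: ville => //.
  - by move=> i x; rewrite ltW ?expR_gt0.
  - exact: uniq_sL.
  move=> j hj.
  have hj' : (j.+1 < kstar)%N.
    move: hj; rewrite -(take_size (sL i0 kstar)) size_sL mem_take_sL //.
    by case/andP.
  rewrite muE hj' /=; apply: eqle; apply: eq_bigr => v _.
  by rewrite /fL /r sqrt_expR ?divr_gt0 // sqrt_mul_ratio.
have VR : \sum_y piY (fun i => Qout (Wr eps) (Pat kstar P0 P1 i)) y *
     (Ev fR (sR i0 kstar) 1 alpha.+1 y)%:R <= 1 * BC ^+ alpha.+1.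
  apply: ville => //.
  - by move=> i x; rewrite ltW ?expR_gt0.
  - exact: uniq_sR.
  move=> j hj.
  have hj' : (kstar <= j.+1)%N.
    move: hj; rewrite -(take_size (sR i0 kstar)) size_sR mem_take_sR //.
    by case/andP.
  rewrite muE ltnNge hj' /=; apply: eqle; apply: eq_bigr => v _.
  by rewrite /fR sqrt_expR ?divr_gt0 // sqrt_mul_ratio // mulrC.
have incl : forall y, ~~ ((kstar - alpha <= khat y)%N && (khat y <= kstar + alpha)%N) ->
   Ev fL (sL i0 kstar) 1 alpha.+1 y || Ev fR (sR i0 kstar) 1 alpha.+1 y.
  move=> y hE.
  have [/andP[k1 kn] hmax] := Hk y.
  have kin : (1 <= kstar <= n)%N by apply/andP; split; lia.
  have hks := hmax kstar kin.
  case: (ltnP (khat y) (kstar - alpha)) => hlo.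
    apply/orP; left; apply/hasP; exists (kstar - khat y)%N.
      by rewrite mem_iota size_sL; apply/andP; split; lia.
    apply/andP; split; first lia.
    rewrite mul1r -expR_sum; apply: (le_trans _ (expR_ge1Dx _)); rewrite lerDl.
    rewrite -mulr_suml; apply: mulr_ge0 => //.
    rewrite (sum_seq_pred (P := fun i : 'I_n => (khat y <= i.+1)%N && (i.+1 < kstar)%N)).
    - move: hks; rewrite (@statS_diffL _ _ _ _ _ _ (khat y) kstar); last lia.
      rewrite /r; lra.
    - by apply: take_uniq; apply: uniq_sL.
    move=> i; rewrite mem_take_sL //; last lia.
    by rewrite (_ : (kstar - (kstar - khat y) = khat y)%N) //; lia.
  case: (leqP (khat y) (kstar + alpha)) => hhi.
    by move: hE; rewrite hlo hhi.
  apply/orP; right; apply/hasP; exists (khat y - kstar)%N.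
    by rewrite mem_iota size_sR; apply/andP; split; lia.
  apply/andP; split; first lia.
  rewrite mul1r -expR_sum; apply: (le_trans _ (expR_ge1Dx _)); rewrite lerDl.
  rewrite -mulr_suml; apply: mulr_ge0 => //.
  have -> : \sum_(j <- take (khat y - kstar) (sR i0 kstar)) ln (Q0 (y j) / Q1 (y j)) =
            - \sum_(j <- take (khat y - kstar) (sR i0 kstar)) r (y j).
    rewrite -sumrN; apply: eq_bigr => j _.
    by rewrite /r -invf_div lnV // posrE divr_gt0.
  rewrite (sum_seq_pred (P := fun i : 'I_n => (kstar <= i.+1)%N && (i.+1 < khat y)%N)).
  - move: hks; rewrite (@statS_diffR _ _ _ _ _ _ (khat y) kstar); last lia.
    rewrite /r; lra.
  - by apply: take_uniq; apply: uniq_sR.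
  move=> i; rewrite mem_take_sR //; last lia.
  by rewrite (_ : (kstar + (khat y - kstar) = khat y)%N) //; lia.
apply: (@le_trans _ _ (\sum_y piY (fun i => Qout (Wr eps) (Pat kstar P0 P1 i)) y *
     (Ev fL (sL i0 kstar) 1 alpha.+1 y)%:R +
   \sum_y piY (fun i => Qout (Wr eps) (Pat kstar P0 P1 i)) y *
     (Ev fR (sR i0 kstar) 1 alpha.+1 y)%:R)).
  rewrite -big_split /=; apply: ler_sum => y _.
  have pg := piY_ge0 mu_ge0 y.
  move: (incl y).
  case: ((kstar - alpha <= khat y)%N && (khat y <= kstar + alpha)%N) => /=.
    by move=> _; rewrite mulr0; apply: addr_ge0; apply: mulr_ge0.
  move=> /(_ isT).
  case: (Ev fL _ _ _ y); case: (Ev fR _ _ _ y) => //= _; rewrite ?mulr1 ?mulr0 ?addr0 ?add0r //.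
  by rewrite lerDl.
apply: le_trans (lerD VL VR) _; rewrite !mul1r.
pose t := (expR eps - 1) / (expR eps + #|X|%:R - 1).
pose C := 2 * t ^+ 2 * dTV P0 P1 ^+ 2.
pose sr := Num.min (2 * eps) ((expR eps - 1) / (expR eps + 1) * sP P0 P1).
pose istar := Defs.nat_of_pos (Num.ceil (log2 ((n%:R - 1) / alpha%:R : R))).
have hC : BC ^+ 2 + C / 2 <= 1.
  have gen : forall a b : R, 2 * a ^+ 2 * b ^+ 2 / 2 = (a * b) ^+ 2 by move=> a b; field.
  rewrite /C gen.
  exact: hBC.
have C0 : 0 <= C.
  by apply: mulr_ge0; [apply: mulr_ge0 => //; exact: sqr_ge0 | exact: sqr_ge0].
have hs : 4 * C <= sr ^+ 2.
  have := key8 e0 hP0 hP1 p0 p1; rewrite -/sr.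
  have gen : forall a b : R, 4 * (2 * a ^+ 2 * b ^+ 2) = 8 * (a * b) ^+ 2 by move=> a b; ring.
  rewrite /C gen.
  by [].
have BCa : BC ^+ alpha.+1 <= BC ^+ alpha.
  by rewrite exprSr ler_piMr // exprn_ge0.
have ist : (0 < istar)%N by apply: ist_pos; lia.
have key : BC ^+ alpha.+1 <= Num.min
   (\sum_(1 <= i < istar.+1) expR (- ((2 ^+ i.-1) * alpha%:R * C ^+ 2) / sr ^+ 2))
   ((1 - C / 2) `^ (alpha%:R / 2)).
  apply: min_ge; last exact: le_trans BCa (final_pow _ BC0 hC).
  rewrite big_ltn; last by lia.
  have rest : 0 <= \sum_(2 <= i < istar.+1) expR (- ((2 ^+ i.-1) * alpha%:R * C ^+ 2) / sr ^+ 2).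
    by apply: sumr_ge0 => i _; rewrite ltW ?expR_gt0.
  apply: le_trans (_ : _ <= expR (- (2 ^+ 0 * alpha%:R * C ^+ 2) / sr ^+ 2)) _.
    by rewrite expr0 mul1r; apply: le_trans BCa (final_exp _ BC0 hC C0 hs).
  by rewrite lerDl.
rewrite /rr_bound /=.
rewrite two_mul.
by rewrite ler_pM2l //; exact: key.
Qed.
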